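(* Assume $0<\beta\le\alpha<\sqrt n$ and $e\in\mathbb{R}^n$ satisfies $\|e\|=\sqrt n$. Let $\bar x$ be any point of $\partial K_e(\alpha)$ other than the origin. Assume $v\ne0$ lies in the tangent space to $\partial K_e(\alpha)$ at $\bar x$, and also lies in the tangent space to $\partial K_e(\beta)$ at some point other than the origin. Then the angle $\theta$ between $\bar x$ and $v$ satisfies $|\cos\theta|\le\beta/\alpha$.
   Context: $\mathbb{R}^n$ carries the dot product and Euclidean norm. For $0<\gamma<\sqrt n$, $K_e(\gamma)=\{x:e^Tx\ge\gamma\|x\|\}$, and $\partial$ denotes boundary. For $0\ne z\in\partial K_e(\gamma)$, the tangent space to $\partial K_e(\gamma)$ at $z$ is $\{u:(e^Tz)(e^Tu)-\gamma^2z^Tu=0\}$ (the tangent space of the quadric $(e^Tx)^2-\gamma^2\|x\|^2=0$ at $z$). *)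

(* Defs.v *)
From HB Require Import structures.
From mathcomp Require Import all_boot all_order all_algebra.
From mathcomp Require Import all_classical all_reals all_analysis.
Set Implicit Arguments. Unset Strict Implicit. Unset Printing Implicit Defensive.
Import Order.TTheory GRing.Theory Num.Theory.
Import numFieldNormedType.Exports.
Local Open Scope classical_set_scope.
Local Open Scope ring_scope.

Definition dotp (R : realType) (n : nat) (u v : 'rV[R]_n) : R :=
  \sum_(i < n) u ord0 i * v ord0 i.

Definition enorm (R : realType) (n : nat) (u : 'rV[R]_n) : R :=
  Num.sqrt (dotp u u).

Definition Kcone (R : realType) (n : nat) (e : 'rV[R]_n) (g : R) : set 'rV[R]_n :=
  [set x | g * enorm x <= dotp e x].

Definition bdry (R : realType) (n : nat) (A : set 'rV[R]_n) : set 'rV[R]_n :=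
  closure A `\` interior A.

Definition tangent_space (R : realType) (n : nat) (e : 'rV[R]_n) (g : R)
    (z : 'rV[R]_n) : set 'rV[R]_n :=
  [set u | dotp e z * dotp e u - g ^+ 2 * dotp z u = 0].

(* Main.v *)
Require Import Defs.
From HB Require Import structures.
From mathcomp Require Import all_boot all_order all_algebra.
From mathcomp Require Import all_classical all_reals all_analysis.
From mathcomp Require Import ring lra.
Import Order.TTheory GRing.Theory Num.Theory.
Import numFieldNormedType.Exports.
Local Open Scope classical_set_scope.
Local Open Scope ring_scope.

Section S.
Context {R : realType} {n : nat}.
Implicit Types (u v z : 'rV[R]_n).

Lemma cont_sum (T : topologicalType) (F : 'I_n -> T -> R) :
  (forall i, continuous (F i)) -> continuous (fun x => \sum_(i < n) F i x).
Proof.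
move=> H x.
elim: (index_enum _) => [|a s IH].
  under eq_fun do rewrite big_nil.
  exact: cst_continuous.
under eq_fun do rewrite big_cons.
exact: (continuousD (H a x) IH).
Qed.

Lemma dotp_cont u : continuous (fun x : 'rV[R]_n => dotp u x).
Proof.
apply: cont_sum => i x.
apply: (continuousM (s := fun=> u ord0 i) (t := fun y : 'rV[R]_n => y ord0 i)).
  exact: cst_continuous.
exact: coord_continuous.
Qed.

Lemma enorm_cont : continuous (fun x : 'rV[R]_n => enorm x).
Proof.
move=> x; apply: (continuous_comp (f := fun y : 'rV[R]_n => dotp y y)).
  apply: cont_sum => i y.
  apply: (continuousM (s := fun y : 'rV[R]_n => y ord0 i) (t := fun y : 'rV[R]_n => y ord0 i));
  exact: coord_continuous.
exact: sqrt_continuous.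
Qed.

Lemma f_cont u (g : R) : continuous (fun x : 'rV[R]_n => dotp u x - g * enorm x).
Proof.
move=> x; apply: (continuousB (dotp_cont u x)).
apply: (continuousM (s := fun=> g) (t := fun y : 'rV[R]_n => enorm y)); first exact: cst_continuous.
exact: enorm_cont.
Qed.


Lemma bdry_eq u (g : R) x : bdry (Kcone u g) x -> dotp u x = g * enorm x.
Proof.
move=> [cl nint].
set f := fun x : 'rV[R]_n => dotp u x - g * enorm x.
have fc := f_cont u g x.
apply/eqP; rewrite eq_le; apply/andP; split.
  rewrite leNgt; apply/negP => lt; apply: nint.
  have nb : nbhs (f x) [set y : R | 0 < y].
    apply: open_nbhs_nbhs; split; first exact: open_gt.
    by rewrite /= /f subr_gt0.
  have h : nbhs x (f @^-1` [set y : R | 0 < y]) := fc _ nb.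
  rewrite /interior /=; apply: (filterS _ h) => y /=; rewrite /f subr_gt0 /Kcone /=.
  exact: ltW.
rewrite leNgt; apply/negP => lt.
have nb : nbhs (f x) [set y : R | y < 0].
  apply: open_nbhs_nbhs; split; first exact: open_lt.
  by rewrite /= /f subr_lt0.
have [y [Ay By]] := cl _ (fc _ nb).
move: Ay By; rewrite /Kcone /f /= subr_lt0 => Ay By.
by move: (le_lt_trans Ay By); rewrite ltxx.
Qed.

Lemma cl_ge u (g : R) x : bdry (Kcone u g) x -> g * enorm x <= dotp u x.
Proof. by move/bdry_eq => ->. Qed.

Lemma dotpC u v : dotp u v = dotp v u.
Proof. by apply: eq_bigr => i _; rewrite mulrC. Qed.

Lemma dotp_ge0 u : 0 <= dotp u u.
Proof. by apply: sumr_ge0 => i _; rewrite -expr2 sqr_ge0. Qed.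

Lemma dotp_eq0 u : dotp u u = 0 -> u = 0.
Proof.
move=> /eqP; rewrite psumr_eq0; last by move=> i _; rewrite -expr2 sqr_ge0.
move=> /allP H; apply/rowP => j; rewrite mxE.
by have := H j (mem_index_enum j); rewrite implyTb mulf_eq0 orbb => /eqP.
Qed.

Lemma enorm_sq u : enorm u ^+ 2 = dotp u u.
Proof. by rewrite /enorm sqr_sqrtr // dotp_ge0. Qed.

Lemma enorm_gt0 u : u != 0 -> 0 < enorm u.
Proof.
move=> u0; rewrite /enorm sqrtr_gt0 lt_neqAle dotp_ge0 andbT eq_sym.
by apply/eqP => /dotp_eq0 h; move: u0; rewrite h eqxx.
Qed.

Lemma dotp_quad u v (a b : R) :
  dotp (a *: u + b *: v) (a *: u + b *: v) =
  a ^+ 2 * dotp u u + 2 * a * b * dotp u v + b ^+ 2 * dotp v v.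
Proof.
rewrite /dotp !mulr_sumr -!big_split /=; apply: eq_bigr => i _.
rewrite !mxE; ring.
Qed.

Lemma cs u v : u != 0 -> v != 0 -> `|dotp u v| <= enorm u * enorm v.
Proof.
move=> u0 v0; have hu := @enorm_gt0 u u0; have hv := @enorm_gt0 v v0.
have q1 := dotp_ge0 (enorm v *: u + enorm u *: v).
have q2 := dotp_ge0 (enorm v *: u + (- enorm u) *: v).
rewrite dotp_quad in q1; rewrite dotp_quad in q2; rewrite -!enorm_sq in q1 q2.
have p : 0 < enorm u * enorm v by rewrite mulr_gt0.
set a := enorm u in q1 q2 p *; set b := enorm v in q1 q2 p *; set d := dotp u v in q1 q2 *.
have h1 : 0 <= (a * b) * (d + a * b) by lra.
have h2 : 0 <= (a * b) * (a * b - d) by lra.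
rewrite (pmulr_rge0 _ p) in h1; rewrite (pmulr_rge0 _ p) in h2.
rewrite ler_norml; apply/andP; split; lra.
Qed.

End S.

Theorem lemma5p2 (R : realType) (n : nat) (alpha beta : R) (e xbar v : 'rV[R]_n) :
  0 < beta -> beta <= alpha -> alpha < Num.sqrt n%:R ->
  enorm e = Num.sqrt n%:R ->
  bdry (Kcone e alpha) xbar -> xbar != 0 ->
  v != 0 ->
  tangent_space e alpha xbar v ->
  (exists z : 'rV[R]_n, [/\ bdry (Kcone e beta) z, z != 0 & tangent_space e beta z v]) ->
  `| dotp xbar v / (enorm xbar * enorm v) | <= beta / alpha.
Proof.
move=> hb hba _ _ bx x0 v0 tx [z [bz z0 tz]].
have ex := bdry_eq _ _ _ bx; have hez := cl_ge _ _ _ bz.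
have nx := enorm_gt0 _ x0; have nv := enorm_gt0 _ v0; have nz := enorm_gt0 _ z0.
have csz := cs _ _ z0 v0.
move: tx tz; rewrite /tangent_space /= => tx tz.
have ha : 0 < alpha by apply: lt_le_trans hba.
rewrite ex in tx.
set xv := dotp xbar v in tx *; set ev := dotp e v in tx tz *.
set zv := dotp z v in tz csz; set ez := dotp e z in tz hez.
set a := enorm xbar in nx ex tx *; set b := enorm v in nv csz *; set c := enorm z in nz hez csz.
have e1 : alpha * xv = a * ev.
  have : alpha * (alpha * xv - a * ev) = 0.
    by rewrite -[RHS]oppr0 -tx; ring.
  by move/eqP; rewrite mulf_eq0 gt_eqF //= subr_eq0 => /eqP.
have ezp : 0 < ez by apply: lt_le_trans hez; rewrite mulr_gt0.
have e2 : `|ev| <= beta * b.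
  have h : ez * `|ev| = beta ^+ 2 * `|zv|.
    have -> : ez * `|ev| = `|ez * ev| by rewrite normrM gtr0_norm.
    have -> : ez * ev = beta ^+ 2 * zv by apply/eqP; rewrite -subr_eq0 tz.
    by rewrite normrM ger0_norm // sqr_ge0.
  have h2 : beta * c * `|ev| <= beta ^+ 2 * c * b.
    apply: (le_trans (y := ez * `|ev|)); first by rewrite ler_wpM2r.
    by rewrite h -mulrA ler_wpM2l // sqr_ge0.
  have bc : 0 < beta * c by rewrite mulr_gt0.
  rewrite -(ler_pM2l bc); apply: (le_trans h2); rewrite (_ : beta ^+ 2 * c * b = beta * c * (beta * b)) //.
  by rewrite expr2; ring.
have ab : 0 < a * b by rewrite mulr_gt0.
rewrite normrM normfV (gtr0_norm ab) ler_pdivrMr //.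
rewrite -(ler_pM2l ha).
have -> : alpha * (beta / alpha * (a * b)) = a * (beta * b).
  by field; rewrite gt_eqF.
rewrite -{1}(gtr0_norm ha) -normrM e1 normrM (gtr0_norm nx).
by apply: ler_wpM2l => //; exact: ltW.
Qed.
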